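(* Let $G=(V,E)$ be a graph with $m\ge1$ edges and no isolated vertices. Then the in-degree distribution of any biased orientation of $G$ is an optimal solution of the linear program $$\min\ \sum_{v\in V} -p_v\log\frac{\deg(v)}{m}\quad\text{subject to } p\in P(G),$$ and the optimum value of this linear program is at most $\mathrm{OPT}(G)$.
   Context: All graphs are finite, undirected and loopless, multiple edges allowed. For $S\subseteq V$, $e(S)$ is the fraction of edges of $G$ incident to at least one vertex of $S$, and $p(S):=\sum_{v\in S}p_v$. $P(G):=\{p\in\mathbb{R}^V : p(S)\le e(S)\ \forall S\subseteq V,\ p(V)=1\}$. For an orientation $\vec G$, the in-degree distribution is $p_v:=\rho_{\vec G}(v)/m$ with $\rho_{\vec G}(v)$ the in-degree of $v$. Entropy $H(p):=\sum_v -p_v\log p_v$ ($\log$ base $2$, $-0\log0:=0$); $\mathrm{OPT}(G)$ is the minimum entropy of the in-degree distribution of an orientation of $G$. An orientation is biased if each edge $vw$ with $\deg(v)>\deg(w)$ is oriented toward $v$. *)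

(* Defs.v *)
From mathcomp Require Import all_boot.
From Stdlib Require Import Reals.

Set Implicit Arguments.
Unset Strict Implicit.
Unset Printing Implicit Defensive.

(* A finite loopless multigraph: vertex type V, edge type E (each element of E is
   one edge, so parallel edges are allowed), endpoints ends e = (u, w). *)

Definition loopless (V E : finType) (ends : E -> V * V) : Prop :=
  forall e : E, (ends e).1 <> (ends e).2.

Definition incident (V E : finType) (ends : E -> V * V) (v : V) (e : E) : bool :=
  (v == (ends e).1) || (v == (ends e).2).

(* degree of v (graph is loopless, so this is the usual degree) *)
Definition deg (V E : finType) (ends : E -> V * V) (v : V) : nat :=
  #|[set e : E | incident ends v e]|.

Definition nedges (E : finType) : nat := #|E|.

Local Open Scope R_scope.

Definition log2 (x : R) : R := ln x / ln 2.

Notation "\rsum_ ( i 'in' A ) F" := (\big[Rplus/0%R]_(i in A) F)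
  (at level 41, F at level 41, i, A at level 50) : R_scope.
Notation "\rsum_ ( i : T ) F" := (\big[Rplus/0%R]_(i : T) F)
  (at level 41, F at level 41, i at level 50) : R_scope.

Definition frac_edges (V E : finType) (ends : E -> V * V) (S : {set V}) : R :=
  INR #|[set e : E | ((ends e).1 \in S) || ((ends e).2 \in S)]| / INR (nedges E).

Definition pS (V : finType) (p : V -> R) (S : {set V}) : R := \rsum_(v in S) p v.

Definition inP (V E : finType) (ends : E -> V * V) (p : V -> R) : Prop :=
  (forall S : {set V}, pS p S <= frac_edges ends S) /\ pS p [set: V] = 1.

(* An orientation: o e = true means e is oriented towards (ends e).1,
   o e = false means towards (ends e).2. *)
Definition head (V E : finType) (ends : E -> V * V) (o : E -> bool) (e : E) : V :=
  if o e then (ends e).1 else (ends e).2.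

Definition indeg (V E : finType) (ends : E -> V * V) (o : E -> bool) (v : V) : nat :=
  #|[set e : E | head ends o e == v]|.

Definition indeg_dist (V E : finType) (ends : E -> V * V) (o : E -> bool) (v : V) : R :=
  INR (indeg ends o v) / INR (nedges E).

Definition biased (V E : finType) (ends : E -> V * V) (o : E -> bool) : Prop :=
  forall e : E,
    (ltn (deg ends (ends e).2) (deg ends (ends e).1) -> head ends o e = (ends e).1) /\
    (ltn (deg ends (ends e).1) (deg ends (ends e).2) -> head ends o e = (ends e).2).

Definition negxlogx (x : R) : R := if Req_EM_T x 0 then 0 else - (x * log2 x).

Definition entropy (V : finType) (p : V -> R) : R := \rsum_(v : V) negxlogx (p v).

Definition OPT (V E : finType) (ends : E -> V * V) : R :=
  \big[Rmin/entropy (indeg_dist ends (fun _ => true))]_(o : {ffun E -> bool})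
     entropy (indeg_dist ends o).

Definition lp_obj (V E : finType) (ends : E -> V * V) (p : V -> R) : R :=
  \rsum_(v : V) (- (p v * log2 (INR (deg ends v) / INR (nedges E)))).

(* Main.v *)
From HB Require Import structures.
Require Import Defs.
From mathcomp Require Import all_boot.
From Stdlib Require Import Reals Lra Lia.
Local Open Scope R_scope.
HB.instance Definition _ := Monoid.isComLaw.Build R 0 Rplus (fun a b c => esym (Rplus_assoc a b c)) Rplus_comm Rplus_0_l.

Lemma rsum_lin (I : finType) (P : pred I) (F G : I -> R) a b :
  \big[Rplus/0]_(i | P i) (a * F i + b * G i) =
  a * \big[Rplus/0]_(i | P i) F i + b * \big[Rplus/0]_(i | P i) G i.
Proof.
apply: (big_ind3 (fun x y z => x = a * y + b * z)).
- ring.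
- move=> x1 y1 z1 x2 y2 z2 -> ->; ring.
- by [].
Qed.

Lemma rsum_le (I : finType) (P : pred I) (F G : I -> R) :
  (forall i, P i -> F i <= G i) ->
  \big[Rplus/0]_(i | P i) F i <= \big[Rplus/0]_(i | P i) G i.
Proof.
move=> H; apply: (big_ind2 (fun x y => x <= y)) => //.
- lra.
- move=> *; lra.
Qed.

Lemma INR_sum (I : finType) (P : pred I) (f : I -> nat) :
  INR (\sum_(i | P i) f i) = \big[Rplus/0]_(i | P i) INR (f i).
Proof. exact: (big_morph INR plus_INR). Qed.

Lemma log2_le a b : 0 < a -> a <= b -> log2 a <= log2 b.
Proof.
move=> Ha Hab; rewrite /log2 /Rdiv.
have H2 : 0 < ln 2 by rewrite -ln_1; apply: ln_increasing; lra.
apply: Rmult_le_compat_r; first by apply/Rlt_le/Rinv_0_lt_compat.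
case: (Rle_lt_or_eq_dec _ _ Hab) => [H|<-]; last lra.
by apply/Rlt_le/ln_increasing.
Qed.

Lemma card_heads (V E : finType) (ends : E -> V * V) (o : E -> bool) (S : {set V}) :
  \sum_(v in S) indeg ends o v = #|[set e | Defs.head ends o e \in S]|.
Proof.
rewrite -sum1_card (partition_big (Defs.head ends o) (mem S)) /=; last by move=> e; rewrite inE.
apply: eq_bigr => v Hv; rewrite /indeg -sum1_card; apply: eq_bigl => e.
rewrite !inE; case: eqP => [->|_]; by rewrite ?Hv ?andbF ?andbT.
Qed.

Lemma pS_indeg (V E : finType) (ends : E -> V * V) (o : E -> bool) (S : {set V}) :
  pS (indeg_dist ends o) S = INR #|[set e | Defs.head ends o e \in S]| / INR (nedges E).
Proof.
rewrite /pS /indeg_dist -card_heads INR_sum /Rdiv.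
have := @rsum_lin _ (fun v => v \in S) (fun v => INR (indeg ends o v)) (fun v => INR (indeg ends o v))
  (/ INR (nedges E)) 0.
under eq_bigr do rewrite Rmult_0_l Rplus_0_r Rmult_comm.
move=> ->; ring.
Qed.

Lemma m_pos (E : finType) : leq 1 (nedges E) -> 0 < INR (nedges E).
Proof. move=> H; apply: lt_0_INR; apply/ltP; exact: H. Qed.

Lemma inP_orient (V E : finType) (ends : E -> V * V) (o : E -> bool) :
  leq 1 (nedges E) -> inP ends (indeg_dist ends o).
Proof.
move=> Hm; have Hp := @m_pos _ Hm; split.
- move=> S; rewrite pS_indeg /frac_edges /Rdiv.
  apply: Rmult_le_compat_r; first by apply/Rlt_le/Rinv_0_lt_compat.
  apply: le_INR; apply/leP; apply: subset_leq_card; apply/subsetP => e.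
  rewrite !inE /Defs.head; by case: (o e) => ->; rewrite ?orbT.
- rewrite pS_indeg.
  have -> : #|[set e | Defs.head ends o e \in [set: V]]| = nedges E.
    by rewrite /nedges; apply: eq_card => e; rewrite !inE.
  field; lra.
Qed.

Lemma biased_level (V E : finType) (ends : E -> V * V) (o : E -> bool) t :
  loopless ends -> biased ends o ->
  [set e | Defs.head ends o e \in [set v | leq t (deg ends v)]] =
  [set e | ((ends e).1 \in [set v | leq t (deg ends v)]) || ((ends e).2 \in [set v | leq t (deg ends v)])].
Proof.
move=> Hl Hb; apply/setP => e; rewrite !inE.
have [H1 H2] := Hb e.
have Hne := Hl e.
case Ht1: (leq t (deg ends (ends e).1)); case Ht2: (leq t (deg ends (ends e).2)); rewrite /=.
- by rewrite /Defs.head; case: (o e); rewrite ?Ht1 ?Ht2.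
- rewrite H1 ?Ht1 //. apply: (leq_trans _ Ht1). by rewrite ltnNge Ht2.
- rewrite H2 ?Ht2 //. apply: (leq_trans _ Ht2). by rewrite ltnNge Ht1.
- by rewrite /Defs.head; case: (o e); rewrite ?Ht1 ?Ht2.
Qed.

Definition Fk (V E : finType) (ends : E -> V * V) (k : nat) (q : V -> R) : R :=
  \big[Rplus/0]_(v : V) (- (q v * log2 (INR (minn (deg ends v) k.+1) / INR (nedges E)))).
Arguments Fk {V E}.

Lemma Fk_step (V E : finType) (ends : E -> V * V) k (q : V -> R) :
  Fk ends k.+1 q = Fk ends k q -
    (log2 (INR k.+2 / INR (nedges E)) - log2 (INR k.+1 / INR (nedges E))) *
    pS q [set v | leq k.+2 (deg ends v)].
Proof.
rewrite /Fk /pS [\big[Rplus/0]_(v in _) _]big_mkcond.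
set c := (log2 _ - _).
have := @rsum_lin V (fun _ => true)
  (fun v => - (q v * log2 (INR (minn (deg ends v) k.+1) / INR (nedges E))))
  (fun v => if v \in [set v | leq k.+2 (deg ends v)] then q v else 0) 1 (- c).
move=> Hl.
have -> : forall a b, a - c * b = 1 * a + - c * b by move=> *; ring.
rewrite -Hl.
apply: eq_bigr => v _; rewrite inE.
case H: (leq k.+2 (deg ends v)).
- have -> : minn (deg ends v) k.+2 = k.+2 by apply/minn_idPr; exact: H.
  have -> : minn (deg ends v) k.+1 = k.+1 by apply/minn_idPr; exact: ltnW H.
  rewrite /c; ring.
- have Hd : leq (deg ends v) k.+1 by rewrite leqNgt H.
  have -> : minn (deg ends v) k.+2 = deg ends v by apply/minn_idPl; exact: leq_trans Hd _.
  have -> : minn (deg ends v) k.+1 = deg ends v by apply/minn_idPl.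
  ring.
Qed.

Lemma sumT (V : finType) (q : V -> R) : \big[Rplus/0]_(v : V) q v = pS q [set: V].
Proof. by rewrite /pS; apply: eq_bigl => v; rewrite inE. Qed.

Lemma Fk_base (V E : finType) (ends : E -> V * V) (q : V -> R) :
  (forall v : V, ltn 0%nat (deg ends v)) -> pS q [set: V] = 1 ->
  Fk ends 0 q = - log2 (INR 1 / INR (nedges E)).
Proof.
move=> Hd Hq; rewrite /Fk.
have := @rsum_lin V (fun _ => true) q q (- log2 (INR 1 / INR (nedges E))) 0.
rewrite (@sumT _ q) Hq => Hl.
have -> : - log2 (INR 1 / INR (nedges E)) = - log2 (INR 1 / INR (nedges E)) * 1 + 0 * 1 by ring.
rewrite -Hl; apply: eq_bigr => v _.
have -> : minn (deg ends v) 1 = 1%nat by apply/minn_idPr; exact: Hd.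
ring.
Qed.

Lemma deg_le (V E : finType) (ends : E -> V * V) v : leq (deg ends v) (nedges E).
Proof. exact: max_card. Qed.

Lemma Fk_full (V E : finType) (ends : E -> V * V) (q : V -> R) :
  Fk ends (nedges E) q = lp_obj ends q.
Proof.
rewrite /Fk /lp_obj; apply: eq_bigr => v _.
have -> // : minn (deg ends v) (nedges E).+1 = deg ends v.
apply/minn_idPl; exact: (leq_trans (@deg_le _ _ ends v) (leqnSn _)).
Qed.

Lemma lp_opt (V E : finType) (ends : E -> V * V) (o : E -> bool) (q : V -> R) :
  loopless ends -> leq 1 (nedges E) -> (forall v : V, ltn 0%nat (deg ends v)) ->
  biased ends o -> inP ends q -> lp_obj ends (indeg_dist ends o) <= lp_obj ends q.
Proof.
move=> Hl Hm Hd Hb [Hq1 Hq2].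
have Hp := @m_pos _ Hm.
have [Hp1 Hp2] := @inP_orient _ _ ends o Hm.
rewrite -!Fk_full.
elim: (nedges E) => [|k IH].
  by rewrite !(@Fk_base _ _ ends) //; lra.
rewrite !Fk_step.
set c := (log2 _ - _).
have Hc : 0 <= c.
  rewrite /c; apply: Rge_le; apply: Rge_minus; apply: Rle_ge; apply: log2_le.
    apply: Rdiv_lt_0_compat => //; apply: lt_0_INR; lia.
  apply: Rmult_le_compat_r; first by apply/Rlt_le/Rinv_0_lt_compat.
  apply: le_INR; lia.
have Heq : pS (indeg_dist ends o) [set v | leq k.+2 (deg ends v)] =
           frac_edges ends [set v | leq k.+2 (deg ends v)].
  by rewrite pS_indeg biased_level.
have := Hq1 [set v | leq k.+2 (deg ends v)].
rewrite -Heq => Hle.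
have := Rmult_le_compat_l _ _ _ Hc Hle.
lra.
Qed.

Lemma indeg_le_deg (V E : finType) (ends : E -> V * V) (o : E -> bool) v :
  leq (indeg ends o v) (deg ends v).
Proof.
apply: subset_leq_card; apply/subsetP => e; rewrite !inE /Defs.head /incident.
by case: (o e) => /eqP ->; rewrite eqxx ?orbT.
Qed.

Lemma entropy_ge (V E : finType) (ends : E -> V * V) (o : E -> bool) :
  leq 1 (nedges E) ->
  lp_obj ends (indeg_dist ends o) <= entropy (indeg_dist ends o).
Proof.
move=> Hm; have Hp := @m_pos _ Hm.
rewrite /lp_obj /entropy; apply: rsum_le => v _.
rewrite /negxlogx; case: Req_EM_T => [Heq|Hne] /=; first by rewrite Heq; lra.
have H0 : 0 <= indeg_dist ends o v.
  rewrite /indeg_dist /Rdiv; apply: Rmult_le_pos; first exact: pos_INR.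
  by apply/Rlt_le/Rinv_0_lt_compat.
have Hpos : 0 < indeg_dist ends o v by lra.
have Hle : indeg_dist ends o v <= INR (deg ends v) / INR (nedges E).
  rewrite /indeg_dist /Rdiv; apply: Rmult_le_compat_r; first by apply/Rlt_le/Rinv_0_lt_compat.
  apply: le_INR; apply/leP; exact: indeg_le_deg.
have Hl := log2_le _ _ Hpos Hle.
have := Rmult_le_compat_l _ _ _ H0 Hl.
lra.
Qed.

Lemma OPT_ge (V E : finType) (ends : E -> V * V) x :
  (forall o : E -> bool, x <= entropy (indeg_dist ends o)) -> x <= OPT ends.
Proof.
move=> H; rewrite /OPT.
apply: (big_ind (fun y => x <= y)) => //.
move=> a b Ha Hb; exact: Rmin_glb.
Qed.

Theorem mainTheorem7 (V E : finType) (ends : E -> V * V)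
  (Hloop : loopless ends)
  (Hm : leq 1%nat (nedges E))
  (Hnoiso : forall v : V, ltn 0%nat (deg ends v))
  (o : E -> bool) (Hb : biased ends o) :
  inP ends (indeg_dist ends o) /\
  (forall q : V -> R, inP ends q -> lp_obj ends (indeg_dist ends o) <= lp_obj ends q) /\
  lp_obj ends (indeg_dist ends o) <= OPT ends.
Proof.
split; first exact: (@inP_orient _ _ ends o Hm).
split; first by move=> q Hq; apply: lp_opt.
apply: OPT_ge => o'.
apply: Rle_trans (@entropy_ge _ _ ends o' Hm).
apply: lp_opt => //; exact: (@inP_orient _ _ ends o' Hm).
Qed.
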